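(* Suppose $\vdash t:A\vee B$ in the system $\mathsf{HA}+\mathsf{EM}_1^-$, where $t$ and $A\vee B$ are closed. Then there exists a term $u$ such that $\vdash u:A$ or a term $v$ such that $\vdash v:B$.
   Context: $\mathsf{HA}+\mathsf{EM}_1^-$ is the Curry–Howard proof-term system for intuitionistic (Heyting) arithmetic over the language $\mathcal{L}$ ($0,\mathsf{S},+,\cdot,=$; atomic formulas are decidable and $\mathsf{P}^\bot$ denotes the complementary atomic predicate of $\mathsf{P}$): natural deduction rules for $\wedge,\to,\vee,\forall,\exists$ with the usual proof terms, an induction rule, Post rules for atomic formulas (equality, Peano axioms, propositional tautologies between atomic formulas), hypothesis terms $\mathsf{H}_a^{\forall\alpha\mathsf{P}}:\forall\alpha\mathsf{P}$ (for $a:\forall\alpha\mathsf{P}$ in the context) and $\mathsf{W}_a^{\exists\alpha\mathsf{P}^\bot}:\exists\alpha\mathsf{P}^\bot$ (for $a:\exists\alpha\mathsf{P}^\bot$ in the context), and the rule $\mathsf{EM}_1^-$: from $\Gamma,a:\forall\alpha\mathsf{P}\vdash u:\exists\beta C$ and $\Gamma,a:\exists\alpha\mathsf{P}^\bot\vdash v:\exists\beta C$, with $\mathsf{P}$ and $C$ atomic, infer $\Gamma\vdash\mathsf{E}_a(u,v):\exists\beta C$. $\vdash t:A$ means $t$ is a proof term of $A$ in the empty context. *)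

(* Defs.v *)
(* Proof-term system HA + EM1^- (Curry-Howard, natural deduction).
   Individual variables are de Bruijn indices; hypothesis (proof) variables are
   named by natural numbers. *)
From Stdlib Require Import List Bool Arith.
Import ListNotations.

Inductive tm : Type :=
| tVar  : nat -> tm
| tZero : tm
| tSucc : tm -> tm
| tPlus : tm -> tm -> tm
| tMult : tm -> tm -> tm.

(* ---------- Formulas ----------
   Atomic formulas: [fAtom true s t] is  s = t ; [fAtom false s t] is its
   complementary atomic predicate  s <> t  (P^bot).  *)
Inductive form : Type :=
| fAtom : bool -> tm -> tm -> form
| fAnd  : form -> form -> form
| fImp  : form -> form -> form
| fOr   : form -> form -> form
| fAll  : form -> form
| fEx   : form -> form.

Definition perp (P : form) : form :=
  match P with
  | fAtom b s t => fAtom (negb b) s t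
  | A => A
  end.

Definition is_atomic (P : form) : Prop :=
  match P with fAtom _ _ _ => True | _ => False end.

Fixpoint tsubst (sg : nat -> tm) (t : tm) : tm :=
  match t with
  | tVar n => sg n
  | tZero => tZero
  | tSucc t => tSucc (tsubst sg t)
  | tPlus a b => tPlus (tsubst sg a) (tsubst sg b)
  | tMult a b => tMult (tsubst sg a) (tsubst sg b)
  end.

Definition tshift (t : tm) : tm := tsubst (fun n => tVar (S n)) t.

Definition up (sg : nat -> tm) : nat -> tm :=
  fun n => match n with 0 => tVar 0 | S k => tshift (sg k) end.

Definition scons (t : tm) (sg : nat -> tm) : nat -> tm :=
  fun n => match n with 0 => t | S k => sg k end.

Fixpoint fsubst (sg : nat -> tm) (A : form) : form :=
  match A with
  | fAtom b s t => fAtom b (tsubst sg s) (tsubst sg t)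
  | fAnd A B => fAnd (fsubst sg A) (fsubst sg B)
  | fImp A B => fImp (fsubst sg A) (fsubst sg B)
  | fOr A B => fOr (fsubst sg A) (fsubst sg B)
  | fAll A => fAll (fsubst (up sg) A)
  | fEx A => fEx (fsubst (up sg) A)
  end.

Definition fshift (A : form) : form := fsubst (fun n => tVar (S n)) A.
Definition inst (A : form) (m : tm) : form := fsubst (scons m tVar) A.
(* A(S alpha) for A(alpha), alpha = index 0, same scope *)
Definition inst_succ (A : form) : form :=
  fsubst (scons (tSucc (tVar 0)) (fun n => tVar (S n))) A.

Fixpoint tm_wf (k : nat) (t : tm) : Prop :=
  match t with
  | tVar n => n < k
  | tZero => True
  | tSucc t => tm_wf k t
  | tPlus a b | tMult a b => tm_wf k a /\ tm_wf k b
  end.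

Fixpoint form_wf (k : nat) (A : form) : Prop :=
  match A with
  | fAtom _ s t => tm_wf k s /\ tm_wf k t
  | fAnd A B | fImp A B | fOr A B => form_wf k A /\ form_wf k B
  | fAll A | fEx A => form_wf (S k) A
  end.

Definition form_closed (A : form) : Prop := form_wf 0 A.

(* ---------- Post rules (atomic rules) ----------
   Valuation of atomic formulas treating each equation s = t as a
   propositional variable and s <> t as its negation. *)
Definition atom_val (v : tm -> tm -> bool) (P : form) : bool :=
  match P with
  | fAtom b s t => if b then v s t else negb (v s t)
  | _ => false
  end.

Inductive PostRule : list form -> form -> Prop :=
| post_refl : forall t, PostRule [] (fAtom true t t)
| post_leibniz : forall s t P, is_atomic P ->
    PostRule [fAtom true s t; inst P s] (inst P t)
| post_succ_zero : forall t P, is_atomic P ->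
    PostRule [fAtom true (tSucc t) tZero] P
| post_succ_inj : forall s t,
    PostRule [fAtom true (tSucc s) (tSucc t)] (fAtom true s t)
| post_plus0 : forall t, PostRule [] (fAtom true (tPlus t tZero) t)
| post_plusS : forall s t,
    PostRule [] (fAtom true (tPlus s (tSucc t)) (tSucc (tPlus s t)))
| post_mult0 : forall t, PostRule [] (fAtom true (tMult t tZero) tZero)
| post_multS : forall s t,
    PostRule [] (fAtom true (tMult s (tSucc t)) (tPlus (tMult s t) s))
| post_taut : forall Ps C,
    Forall is_atomic Ps -> is_atomic C ->
    (forall v : tm -> tm -> bool,
        Forall (fun P => atom_val v P = true) Ps -> atom_val v C = true) ->
    PostRule Ps C.

Inductive pt : Type :=
| pHyp  : nat -> pt
| pPair : pt -> pt -> pt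
| pFst  : pt -> pt
| pSnd  : pt -> pt
| pLam  : nat -> pt -> pt
| pApp  : pt -> pt -> pt
| pInl  : pt -> pt
| pInr  : pt -> pt
| pCase : pt -> nat -> pt -> nat -> pt -> pt
| pLamI : pt -> pt
| pAppI : pt -> tm -> pt
| pExI  : tm -> pt -> pt
| pExE  : pt -> nat -> pt -> pt
| pRec  : pt -> pt -> tm -> pt
| pPost : list pt -> pt
| pH    : nat -> form -> pt
| pW    : nat -> form -> pt
| pEM   : nat -> pt -> pt -> pt.

Fixpoint pt_wf (k : nat) (u : pt) : Prop :=
  match u with
  | pHyp _ => True
  | pPair u v | pApp u v => pt_wf k u /\ pt_wf k v
  | pFst u | pSnd u | pLam _ u | pInl u | pInr u => pt_wf k u
  | pCase u _ v _ w => pt_wf k u /\ pt_wf k v /\ pt_wf k w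
  | pLamI u => pt_wf (S k) u
  | pAppI u m => pt_wf k u /\ tm_wf k m
  | pExI m u => tm_wf k m /\ pt_wf k u
  | pExE u _ v => pt_wf k u /\ pt_wf (S k) v
  | pRec u v m => pt_wf k u /\ pt_wf k v /\ tm_wf k m
  | pPost us =>
      (fix wfl (l : list pt) : Prop :=
         match l with [] => True | u :: l' => pt_wf k u /\ wfl l' end) us
  | pH _ A | pW _ A => form_wf k A
  | pEM _ u v => pt_wf k u /\ pt_wf k v
  end.

(* closed proof term: no free individual variables (free hypothesis
   variables are excluded anyway by typing in the empty context) *)
Definition pt_closed (u : pt) : Prop := pt_wf 0 u.

Definition ctx := list (nat * form).

Fixpoint lookup (a : nat) (G : ctx) : option form :=
  match G with
  | [] => None
  | (b, A) :: G' => if Nat.eqb a b then Some A else lookup a G'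
  end.

Definition ctx_shift (G : ctx) : ctx := map (fun p => (fst p, fshift (snd p))) G.

Inductive typed : ctx -> pt -> form -> Prop :=
| ty_hyp : forall G x A, lookup x G = Some A -> typed G (pHyp x) A
| ty_pair : forall G u v A B, typed G u A -> typed G v B ->
    typed G (pPair u v) (fAnd A B)
| ty_fst : forall G u A B, typed G u (fAnd A B) -> typed G (pFst u) A
| ty_snd : forall G u A B, typed G u (fAnd A B) -> typed G (pSnd u) B
| ty_lam : forall G x u A B, typed ((x, A) :: G) u B ->
    typed G (pLam x u) (fImp A B)
| ty_app : forall G u v A B, typed G u (fImp A B) -> typed G v A ->
    typed G (pApp u v) B
| ty_inl : forall G u A B, typed G u A -> typed G (pInl u) (fOr A B)
| ty_inr : forall G u A B, typed G u B -> typed G (pInr u) (fOr A B)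
| ty_case : forall G u x v y w A B C, typed G u (fOr A B) ->
    typed ((x, A) :: G) v C -> typed ((y, B) :: G) w C ->
    typed G (pCase u x v y w) C
| ty_lamI : forall G u A, typed (ctx_shift G) u A ->
    typed G (pLamI u) (fAll A)
| ty_appI : forall G u m A, typed G u (fAll A) ->
    typed G (pAppI u m) (inst A m)
| ty_exI : forall G m u A, typed G u (inst A m) ->
    typed G (pExI m u) (fEx A)
| ty_exE : forall G u x v A C, typed G u (fEx A) ->
    typed ((x, A) :: ctx_shift G) v (fshift C) ->
    typed G (pExE u x v) C
| ty_rec : forall G u v m A, typed G u (inst A tZero) ->
    typed G v (fAll (fImp A (inst_succ A))) ->
    typed G (pRec u v m) (inst A m)
| ty_post : forall G us Ps C, PostRule Ps C ->
    Forall2 (typed G) us Ps -> typed G (pPost us) C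
| ty_H : forall G a P, is_atomic P -> lookup a G = Some (fAll P) ->
    typed G (pH a (fAll P)) (fAll P)
| ty_W : forall G a P, is_atomic P -> lookup a G = Some (fEx (perp P)) ->
    typed G (pW a (fEx (perp P))) (fEx (perp P))
| ty_EM : forall G a u v P C, is_atomic P -> is_atomic C ->
    typed ((a, fAll P) :: G) u (fEx C) ->
    typed ((a, fEx (perp P)) :: G) v (fEx C) ->
    typed G (pEM a u v) (fEx C).

(* Main.v *)
Require Import Defs.
From Stdlib Require Import List Bool Arith Lia Classical.
Import ListNotations.

Lemma tsubst_ext : forall t s1 s2, (forall n, s1 n = s2 n) -> tsubst s1 t = tsubst s2 t.
Proof. induction t; intros; simpl; f_equal; auto. Qed.

Lemma up_ext : forall s1 s2, (forall n, s1 n = s2 n) -> forall n, up s1 n = up s2 n.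
Proof. intros s1 s2 H [|n]; simpl; auto. rewrite H; auto. Qed.

Lemma fsubst_ext : forall A s1 s2, (forall n, s1 n = s2 n) -> fsubst s1 A = fsubst s2 A.
Proof.
  induction A; intros; simpl; f_equal; auto using tsubst_ext, up_ext.
Qed.

Lemma tsubst_comp : forall t s1 s2,
  tsubst s2 (tsubst s1 t) = tsubst (fun n => tsubst s2 (s1 n)) t.
Proof. induction t; intros; simpl; f_equal; auto. Qed.

Lemma up_comp : forall s1 s2 n,
  tsubst (up s2) (up s1 n) = up (fun k => tsubst s2 (s1 k)) n.
Proof.
  intros s1 s2 [|n]; simpl; auto.
  unfold tshift. rewrite !tsubst_comp. apply tsubst_ext. intros k. simpl.
  unfold tshift. reflexivity.
Qed.

Lemma fsubst_comp : forall A s1 s2,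
  fsubst s2 (fsubst s1 A) = fsubst (fun n => tsubst s2 (s1 n)) A.
Proof.
  induction A; intros; simpl; f_equal; rewrite ?tsubst_comp; auto;
  rewrite IHA; apply fsubst_ext; apply up_comp.
Qed.

Lemma tsubst_closed : forall t k s, tm_wf k t -> (forall i, i < k -> s i = tVar i) ->
  tsubst s t = t.
Proof. induction t; simpl; intros; try f_equal; intuition eauto. Qed.

Lemma fsubst_closed : forall A k s, form_wf k A -> (forall i, i < k -> s i = tVar i) ->
  fsubst s A = A.
Proof.
  induction A; simpl; intros; try (f_equal; intuition eauto using tsubst_closed; fail).
  - f_equal. eapply IHA; eauto. intros [|i] Hi; simpl; auto. rewrite H0 by lia. reflexivity.
  - f_equal. eapply IHA; eauto. intros [|i] Hi; simpl; auto. rewrite H0 by lia. reflexivity.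
Qed.

Lemma tsubst_closed0 : forall t s, tm_wf 0 t -> tsubst s t = t.
Proof. intros. eapply tsubst_closed; eauto. intros; lia. Qed.

Lemma tm_wf_subst : forall t s, (forall i, tm_wf 0 (s i)) -> tm_wf 0 (tsubst s t).
Proof. induction t; simpl; intuition. Qed.

Lemma perp_fsubst : forall A s, perp (fsubst s A) = fsubst s (perp A).
Proof. destruct A; reflexivity. Qed.

Lemma atomic_fsubst : forall A s, is_atomic A -> is_atomic (fsubst s A).
Proof. destruct A; simpl; auto. Qed.
Lemma typed_ind2 (P : ctx -> pt -> form -> Prop)
  (h_hyp : forall G x A, lookup x G = Some A -> P G (pHyp x) A)
  (h_pair : forall G u v A B, typed G u A -> P G u A -> typed G v B -> P G v B ->
      P G (pPair u v) (fAnd A B))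
  (h_fst : forall G u A B, typed G u (fAnd A B) -> P G u (fAnd A B) -> P G (pFst u) A)
  (h_snd : forall G u A B, typed G u (fAnd A B) -> P G u (fAnd A B) -> P G (pSnd u) B)
  (h_lam : forall G x u A B, typed ((x, A) :: G) u B -> P ((x, A) :: G) u B ->
      P G (pLam x u) (fImp A B))
  (h_app : forall G u v A B, typed G u (fImp A B) -> P G u (fImp A B) ->
      typed G v A -> P G v A -> P G (pApp u v) B)
  (h_inl : forall G u A B, typed G u A -> P G u A -> P G (pInl u) (fOr A B))
  (h_inr : forall G u A B, typed G u B -> P G u B -> P G (pInr u) (fOr A B))
  (h_case : forall G u x v y w A B C, typed G u (fOr A B) -> P G u (fOr A B) ->
      typed ((x, A) :: G) v C -> P ((x, A) :: G) v C ->
      typed ((y, B) :: G) w C -> P ((y, B) :: G) w C ->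
      P G (pCase u x v y w) C)
  (h_lamI : forall G u A, typed (ctx_shift G) u A -> P (ctx_shift G) u A ->
      P G (pLamI u) (fAll A))
  (h_appI : forall G u m A, typed G u (fAll A) -> P G u (fAll A) ->
      P G (pAppI u m) (inst A m))
  (h_exI : forall G m u A, typed G u (inst A m) -> P G u (inst A m) ->
      P G (pExI m u) (fEx A))
  (h_exE : forall G u x v A C, typed G u (fEx A) -> P G u (fEx A) ->
      typed ((x, A) :: ctx_shift G) v (fshift C) ->
      P ((x, A) :: ctx_shift G) v (fshift C) ->
      P G (pExE u x v) C)
  (h_rec : forall G u v m A, typed G u (inst A tZero) -> P G u (inst A tZero) ->
      typed G v (fAll (fImp A (inst_succ A))) -> P G v (fAll (fImp A (inst_succ A))) ->
      P G (pRec u v m) (inst A m))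
  (h_post : forall G us Ps C, PostRule Ps C -> Forall2 (typed G) us Ps ->
      Forall2 (P G) us Ps -> P G (pPost us) C)
  (h_H : forall G a P0, is_atomic P0 -> lookup a G = Some (fAll P0) ->
      P G (pH a (fAll P0)) (fAll P0))
  (h_W : forall G a P0, is_atomic P0 -> lookup a G = Some (fEx (perp P0)) ->
      P G (pW a (fEx (perp P0))) (fEx (perp P0)))
  (h_EM : forall G a u v P0 C, is_atomic P0 -> is_atomic C ->
      typed ((a, fAll P0) :: G) u (fEx C) -> P ((a, fAll P0) :: G) u (fEx C) ->
      typed ((a, fEx (perp P0)) :: G) v (fEx C) -> P ((a, fEx (perp P0)) :: G) v (fEx C) ->
      P G (pEM a u v) (fEx C)) :
  forall G t A, typed G t A -> P G t A.
Proof.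
  fix IH 4. intros G t A H. destruct H.
  - apply h_hyp; auto.
  - apply h_pair; auto.
  - eapply h_fst; eauto.
  - eapply h_snd; eauto.
  - apply h_lam; auto.
  - eapply h_app; eauto.
  - apply h_inl; auto.
  - apply h_inr; auto.
  - eapply h_case; eauto.
  - apply h_lamI; auto.
  - apply h_appI; auto.
  - apply h_exI; auto.
  - eapply h_exE; eauto.
  - apply h_rec; auto.
  - apply h_post with Ps; auto.
    clear H. revert us Ps H0. fix IH2 3. intros us Ps H0. destruct H0; constructor.
    + apply IH; assumption.
    + apply IH2; assumption.
  - eapply h_H; eauto.
  - eapply h_W; eauto.
  - apply (h_EM G a u v P0 C); auto.
Qed.

Definition ctx_incl (G G' : ctx) := forall x B, lookup x G = Some B -> lookup x G' = Some B.

Lemma lookup_shift : forall G x, lookup x (ctx_shift G) = option_map fshift (lookup x G).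
Proof. induction G as [|[b B] G IH]; intros; simpl; auto. destruct (Nat.eqb x b); auto. Qed.

Lemma ctx_incl_cons : forall G G' x A, ctx_incl G G' -> ctx_incl ((x, A) :: G) ((x, A) :: G').
Proof. unfold ctx_incl; simpl; intros. destruct (Nat.eqb x0 x); auto. Qed.

Lemma ctx_incl_shift : forall G G', ctx_incl G G' -> ctx_incl (ctx_shift G) (ctx_shift G').
Proof.
  unfold ctx_incl; intros. rewrite lookup_shift in *.
  destruct (lookup x G) eqn:E; simpl in *; try discriminate. rewrite (H _ _ E). auto.
Qed.

Lemma weaken : forall G t A, typed G t A -> forall G', ctx_incl G G' -> typed G' t A.
Proof.
  apply (typed_ind2 (fun G t A => forall G', ctx_incl G G' -> typed G' t A));
  intros; try (econstructor; eauto using ctx_incl_cons, ctx_incl_shift; fail).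
  - eapply ty_post; eauto. clear H H0. induction H1; constructor; auto.
  - match goal with |- typed _ (pEM ?a ?u ?v) (fEx ?C) => match goal with H : typed ((a, fAll ?P) :: _) u _ |- _ => apply (ty_EM _ a u v P C) end end; auto using ctx_incl_cons.
Qed.

Lemma weaken_nil : forall t A G, typed [] t A -> typed G t A.
Proof. intros. eapply weaken; eauto. unfold ctx_incl; simpl; discriminate. Qed.
Definition map_ctx (s : nat -> tm) (G : ctx) : ctx :=
  map (fun p => (fst p, fsubst s (snd p))) G.

Lemma lookup_map : forall G s x, lookup x (map_ctx s G) = option_map (fsubst s) (lookup x G).
Proof. induction G as [|[b B] G IH]; intros; simpl; auto. destruct (Nat.eqb x b); auto. Qed.

Lemma tsubst_id : forall t, tsubst tVar t = t.
Proof. induction t; simpl; f_equal; auto. Qed.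

Lemma shift_up : forall B s, fsubst (up s) (fshift B) = fshift (fsubst s B).
Proof.
  intros. unfold fshift. rewrite !fsubst_comp. apply fsubst_ext. intros n. reflexivity.
Qed.

Lemma map_ctx_shift : forall G s, map_ctx (up s) (ctx_shift G) = ctx_shift (map_ctx s G).
Proof.
  induction G as [|[b B] G IH]; intros; simpl; auto. rewrite IH. f_equal. f_equal. apply shift_up.
Qed.

Lemma inst_subst : forall A m s, fsubst s (inst A m) = inst (fsubst (up s) A) (tsubst s m).
Proof.
  intros. unfold inst. rewrite !fsubst_comp. apply fsubst_ext. intros [|n]; simpl; auto.
  unfold tshift. rewrite tsubst_comp. simpl. rewrite tsubst_id. auto.
Qed.

Lemma inst_succ_subst : forall A s, fsubst (up s) (inst_succ A) = inst_succ (fsubst (up s) A).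
Proof.
  intros. unfold inst_succ. rewrite !fsubst_comp. apply fsubst_ext. intros [|n]; simpl; auto.
  unfold tshift. rewrite tsubst_comp. simpl. apply tsubst_ext. intros; reflexivity.
Qed.

Lemma atom_val_subst : forall P s v, is_atomic P ->
  atom_val v (fsubst s P) = atom_val (fun a b => v (tsubst s a) (tsubst s b)) P.
Proof. destruct P; simpl; tauto. Qed.

Lemma post_subst : forall Ps C, PostRule Ps C -> forall s,
  PostRule (map (fsubst s) Ps) (fsubst s C).
Proof.
  intros Ps C H s. destruct H; simpl; rewrite ?inst_subst.
  - constructor.
  - constructor. apply atomic_fsubst; auto.
  - constructor. apply atomic_fsubst; auto.
  - constructor.
  - constructor.
  - constructor.
  - constructor.
  - constructor.
  - constructor.
    + rewrite Forall_map. eapply Forall_impl; [|eauto]. intros. apply atomic_fsubst; auto.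
    + apply atomic_fsubst; auto.
    + intros v Hv. rewrite atom_val_subst by auto. apply H1.
      rewrite Forall_forall in *. intros P HP.
      rewrite <- atom_val_subst by auto. apply Hv. apply in_map; auto.
Qed.

Lemma typed_subst : forall G t A, typed G t A -> forall s,
  exists t', typed (map_ctx s G) t' (fsubst s A).
Proof.
  apply (typed_ind2 (fun G t A => forall s, exists t', typed (map_ctx s G) t' (fsubst s A)));
  intros; simpl.
  - eexists; constructor. rewrite lookup_map, H. reflexivity.
  - destruct (H0 s), (H2 s). eexists; apply ty_pair; eauto.
  - destruct (H0 s). eexists; eapply ty_fst; eauto.
  - destruct (H0 s). eexists; eapply ty_snd; eauto.
  - destruct (H0 s). eexists; apply ty_lam; exact H1.
  - destruct (H0 s), (H2 s). eexists; eapply ty_app; eauto.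
  - destruct (H0 s). eexists; eapply ty_inl; eauto.
  - destruct (H0 s). eexists; eapply ty_inr; eauto.
  - destruct (H0 s), (H2 s), (H4 s). eexists; eapply ty_case; [exact H5|exact H6|exact H7].
  - destruct (H0 (up s)). eexists; apply ty_lamI. rewrite <- map_ctx_shift. eauto.
  - destruct (H0 s). rewrite inst_subst. eexists; apply ty_appI; eauto.
  - destruct (H0 s). rewrite inst_subst in H1. eexists; eapply ty_exI; eauto.
  - destruct (H0 s), (H2 (up s)). simpl in H4. rewrite map_ctx_shift, shift_up in H4.
    eexists; eapply ty_exE; eauto.
  - destruct (H0 s), (H2 s). simpl in H4. rewrite inst_subst in H3.
    rewrite inst_succ_subst in H4. rewrite inst_subst.
    eexists; eapply ty_rec; eauto.
  - assert (exists us', Forall2 (typed (map_ctx s G)) us' (map (fsubst s) Ps)) as [us' Hus].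
    { clear H H0. induction H1; simpl.
      - exists []; constructor.
      - destruct (H s) as [t' Ht']. destruct IHForall2 as [us' Hus'].
        exists (t' :: us'); constructor; auto. }
    eexists; eapply ty_post; eauto using post_subst.
  - eexists; apply ty_H; auto using atomic_fsubst. rewrite lookup_map, H0; reflexivity.
  - rewrite <- perp_fsubst. eexists; apply ty_W; auto using atomic_fsubst.
    rewrite lookup_map, H0; simpl. rewrite perp_fsubst; reflexivity.
  - destruct (H2 s) as [u1 Hu1], (H4 s) as [v1 Hv1]. simpl in Hu1, Hv1.
    rewrite <- perp_fsubst in Hv1.
    eexists; apply (ty_EM _ a u1 v1 (fsubst (up s) P0) (fsubst (up s) C)); auto using atomic_fsubst.
Qed.

Lemma prv_shift_nil : forall t B, typed [] t B -> exists t', typed [] t' (fshift B).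
Proof. intros. apply (typed_subst _ _ _ H). Qed.
Definition prv (G : ctx) (A : form) : Prop := exists u, typed G u A.

Definition cutcond (G D : ctx) := forall x B, lookup x G = Some B ->
  lookup x D = Some B \/ prv [] B.

Lemma cutcond_cons : forall G D x A, cutcond G D -> cutcond ((x, A) :: G) ((x, A) :: D).
Proof. unfold cutcond; simpl; intros. destruct (Nat.eqb x0 x); auto. Qed.

Lemma cutcond_shift : forall G D, cutcond G D -> cutcond (ctx_shift G) (ctx_shift D).
Proof.
  unfold cutcond; intros. rewrite lookup_shift in *.
  destruct (lookup x G) eqn:E; simpl in *; try discriminate. injection H0; intros; subst.
  destruct (H _ _ E) as [H1|[u Hu]].
  - left; rewrite H1; auto.
  - right. apply prv_shift_nil in Hu. exact Hu.
Qed.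

Lemma cut : forall G t A, typed G t A -> forall D, cutcond G D -> prv D A.
Proof.
  apply (typed_ind2 (fun G t A => forall D, cutcond G D -> prv D A)); intros;
  unfold prv in *.
  - destruct (H0 _ _ H) as [H1|[u Hu]].
    + eexists; apply ty_hyp; eauto.
    + eexists; apply weaken_nil; eauto.
  - destruct (H0 D), (H2 D); auto. eexists; apply ty_pair; eauto.
  - destruct (H0 D); auto. eexists; eapply ty_fst; eauto.
  - destruct (H0 D); auto. eexists; eapply ty_snd; eauto.
  - destruct (H0 ((x, A) :: D)); auto using cutcond_cons. eexists; apply ty_lam; eauto.
  - destruct (H0 D), (H2 D); auto. eexists; eapply ty_app; eauto.
  - destruct (H0 D); auto. eexists; eapply ty_inl; eauto.
  - destruct (H0 D); auto. eexists; eapply ty_inr; eauto.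
  - destruct (H0 D), (H2 ((x, A) :: D)), (H4 ((y, B) :: D)); auto using cutcond_cons.
    eexists; eapply ty_case; eauto.
  - destruct (H0 (ctx_shift D)); auto using cutcond_shift. eexists; apply ty_lamI; eauto.
  - destruct (H0 D); auto. eexists; eapply ty_appI; eauto.
  - destruct (H0 D); auto. eexists; eapply ty_exI; eauto.
  - destruct (H0 D), (H2 ((x, A) :: ctx_shift D)); auto using cutcond_cons, cutcond_shift.
    eexists; eapply ty_exE; eauto.
  - destruct (H0 D), (H2 D); auto. eexists; eapply ty_rec; eauto.
  - assert (exists us', Forall2 (typed D) us' Ps) as [us' Hus].
    { clear H H0. induction H1; simpl.
      - exists []; constructor.
      - destruct (H D) as [t' Ht']; auto. destruct IHForall2 as [us' Hus'].
        exists (t' :: us'); constructor; auto. }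
    eexists; eapply ty_post; eauto.
  - destruct (H1 _ _ H0) as [H2|[u Hu]].
    + eexists; apply ty_H; eauto.
    + eexists; apply weaken_nil; eauto.
  - destruct (H1 _ _ H0) as [H2|[u Hu]].
    + eexists; apply ty_W; eauto.
    + eexists; apply weaken_nil; eauto.
  - destruct (H2 ((a, fAll P0) :: D)) as [u1 Hu1]; auto using cutcond_cons.
    destruct (H4 ((a, fEx (perp P0)) :: D)) as [v1 Hv1]; auto using cutcond_cons.
    eexists; apply (ty_EM _ a u1 v1 P0 C); auto.
Qed.

Lemma prv_subst_nil : forall G t A, typed G t A -> forall s,
  (forall x B, lookup x G = Some B -> prv [] (fsubst s B)) -> prv [] (fsubst s A).
Proof.
  intros. destruct (typed_subst _ _ _ H s) as [t' Ht'].
  eapply cut; eauto. unfold cutcond. intros. rewrite lookup_map in H1.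
  destruct (lookup x G) eqn:E; simpl in *; try discriminate. injection H1; intros; subst.
  right. eapply H0; eauto.
Qed.
Fixpoint teval (e : nat -> nat) (t : tm) : nat :=
  match t with
  | tVar n => e n
  | tZero => 0
  | tSucc t => S (teval e t)
  | tPlus a b => teval e a + teval e b
  | tMult a b => teval e a * teval e b
  end.

Definition ncons (n : nat) (e : nat -> nat) : nat -> nat :=
  fun k => match k with 0 => n | S k => e k end.

Fixpoint feval (e : nat -> nat) (A : form) : Prop :=
  match A with
  | fAtom b s t => if b then teval e s = teval e t else teval e s <> teval e t
  | fAnd A B => feval e A /\ feval e B
  | fImp A B => feval e A -> feval e B
  | fOr A B => feval e A \/ feval e B
  | fAll A => forall n, feval (ncons n e) A
  | fEx A => exists n, feval (ncons n e) A
  end.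

Lemma teval_ext : forall t e e', (forall i, e i = e' i) -> teval e t = teval e' t.
Proof. induction t; simpl; intros; auto. Qed.

Lemma teval_subst : forall t s e, teval e (tsubst s t) = teval (fun i => teval e (s i)) t.
Proof. induction t; simpl; intros; auto. Qed.

Lemma ncons_ext : forall n e e', (forall i, e i = e' i) -> forall i, ncons n e i = ncons n e' i.
Proof. intros n e e' H [|i]; simpl; auto. Qed.

Lemma feval_ext : forall A e e', (forall i, e i = e' i) -> (feval e A <-> feval e' A).
Proof.
  induction A; simpl; intros.
  - rewrite !(teval_ext _ e e') by auto. tauto.
  - rewrite (IHA1 e e'), (IHA2 e e') by auto; tauto.
  - rewrite (IHA1 e e'), (IHA2 e e') by auto; tauto.
  - rewrite (IHA1 e e'), (IHA2 e e') by auto; tauto.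
  - split; intros H1 n; specialize (H1 n);
      [rewrite <- (IHA (ncons n e) (ncons n e'))|rewrite (IHA (ncons n e) (ncons n e'))];
      auto using ncons_ext.
  - split; intros [n H1]; exists n;
      [rewrite <- (IHA (ncons n e) (ncons n e'))|rewrite (IHA (ncons n e) (ncons n e'))];
      auto using ncons_ext.
Qed.

Lemma up_eval : forall s e n i,
  teval (ncons n e) (up s i) = ncons n (fun j => teval e (s j)) i.
Proof.
  intros s e n [|i]; simpl; auto. unfold tshift. rewrite teval_subst. apply teval_ext. auto.
Qed.

Lemma feval_subst : forall A s e, feval e (fsubst s A) <-> feval (fun i => teval e (s i)) A.
Proof.
  induction A; simpl; intros.
  - rewrite !teval_subst. tauto.
  - rewrite IHA1, IHA2; tauto.
  - rewrite IHA1, IHA2; tauto.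
  - rewrite IHA1, IHA2; tauto.
  - split; intros H1 n; specialize (H1 n); rewrite IHA in *;
      [rewrite <- (feval_ext A _ _ (up_eval s e n))|rewrite (feval_ext A _ _ (up_eval s e n))]; auto.
  - split; intros [n H1]; exists n; rewrite IHA in *;
      [rewrite <- (feval_ext A _ _ (up_eval s e n))|rewrite (feval_ext A _ _ (up_eval s e n))]; auto.
Qed.

Lemma feval_inst : forall A m e, feval e (inst A m) <-> feval (ncons (teval e m) e) A.
Proof.
  intros. unfold inst. rewrite feval_subst. apply feval_ext. intros [|i]; reflexivity.
Qed.

Lemma feval_inst_succ : forall A n e,
  feval (ncons n e) (inst_succ A) <-> feval (ncons (S n) e) A.
Proof.
  intros. unfold inst_succ. rewrite feval_subst. apply feval_ext. intros [|i]; reflexivity.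
Qed.

Lemma feval_shift : forall B n e, feval (ncons n e) (fshift B) <-> feval e B.
Proof. intros. unfold fshift. rewrite feval_subst. apply feval_ext. intros; reflexivity. Qed.

Lemma atom_val_eval : forall P e, is_atomic P ->
  (atom_val (fun a b => Nat.eqb (teval e a) (teval e b)) P = true <-> feval e P).
Proof.
  destruct P; simpl; try tauto. intros e _. destruct b.
  - apply Nat.eqb_eq.
  - rewrite negb_true_iff, Nat.eqb_neq. tauto.
Qed.

Lemma post_sound : forall Ps C, PostRule Ps C -> forall e,
  Forall (feval e) Ps -> feval e C.
Proof.
  intros Ps C H e HF. destruct H; simpl in *.
  - auto.
  - inversion HF as [|? ? Ha Hb]; subst. inversion Hb as [|? ? Hc Hd]; subst. simpl in Ha.
    rewrite feval_inst in *. rewrite <- Ha. auto.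
  - inversion HF as [|? ? Ha Hb]; subst. simpl in Ha. discriminate.
  - inversion HF as [|? ? Ha Hb]; subst. simpl in Ha. congruence.
  - lia.
  - lia.
  - lia.
  - lia.
  - apply atom_val_eval; auto. apply H1. rewrite Forall_forall in *. intros.
    apply atom_val_eval; auto.
Qed.

Lemma perp_eval : forall P e, is_atomic P -> (feval e (perp P) <-> ~ feval e P).
Proof. destruct P; simpl; try tauto. intros. destruct b; simpl; lia. Qed.

Lemma sound : forall G t A, typed G t A -> forall e,
  (forall x B, lookup x G = Some B -> feval e B) -> feval e A.
Proof.
  apply (typed_ind2 (fun G t A => forall e,
    (forall x B, lookup x G = Some B -> feval e B) -> feval e A)); intros; simpl in *.
  - eauto.
  - split; eauto.
  - apply (H0 e H1).
  - apply (H0 e H1).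
  - intros HA. apply H0. intros y B' Hy. simpl in Hy. destruct (Nat.eqb y x); eauto. congruence.
  - apply (H0 e H3). apply H2; auto.
  - left; eauto.
  - right; eauto.
  - destruct (H0 e H5).
    + apply H2. intros z B' Hz. simpl in Hz. destruct (Nat.eqb z x); eauto. congruence.
    + apply H4. intros z B' Hz. simpl in Hz. destruct (Nat.eqb z y); eauto. congruence.
  - intros n. apply H0. intros z B' Hz. rewrite lookup_shift in Hz.
    destruct (lookup z G) eqn:E; simpl in Hz; try discriminate. injection Hz; intros; subst.
    apply feval_shift. eauto.
  - apply feval_inst. apply H0; auto.
  - exists (teval e m). apply feval_inst. auto.
  - destruct (H0 e H3) as [n Hn].
    apply (feval_shift C n e). apply H2. intros z B' Hz. simpl in Hz.
    destruct (Nat.eqb z x); [congruence|]. rewrite lookup_shift in Hz.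
    destruct (lookup z G) eqn:E; simpl in Hz; try discriminate. injection Hz; intros; subst.
    apply feval_shift. eauto.
  - apply feval_inst. specialize (H0 e H3). specialize (H2 e H3). simpl in H2.
    generalize (teval e m). induction n.
    + apply feval_inst in H0. auto.
    + apply feval_inst_succ. apply H2. auto.
  - eapply post_sound; eauto. clear H H0. induction H1; constructor; auto.
  - exact (H1 _ _ H0).
  - exact (H1 _ _ H0).
  - destruct (classic (forall n, feval (ncons n e) P0)).
    + apply H2. intros z B' Hz. simpl in Hz. destruct (Nat.eqb z a); eauto.
      injection Hz; intros; subst. simpl. auto.
    + apply H4. intros z B' Hz. simpl in Hz. destruct (Nat.eqb z a); eauto.
      injection Hz; intros; subst. simpl.
      apply not_all_ex_not in H6. destruct H6 as [n Hn]. exists n.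
      apply perp_eval; auto.
Qed.
Fixpoint num (n : nat) : tm := match n with 0 => tZero | S n => tSucc (num n) end.

Lemma prv_refl : forall G t, prv G (fAtom true t t).
Proof. intros. eexists. eapply ty_post with (Ps := []); [constructor|constructor]. Qed.

Lemma prv_leib : forall G P s t, is_atomic P -> prv G (fAtom true s t) -> prv G (inst P s) ->
  prv G (inst P t).
Proof.
  intros G P s t HP [u1 H1] [u2 H2]. eexists.
  eapply ty_post with (us := [u1; u2]); [apply (post_leibniz s t P); auto|].
  repeat constructor; auto.
Qed.

Lemma prv_leib' : forall G P s t A B, is_atomic P -> inst P s = A -> inst P t = B ->
  prv G (fAtom true s t) -> prv G A -> prv G B.
Proof. intros; subst; eapply prv_leib; eauto. Qed.

Lemma inst_tshift : forall x t, tsubst (scons x tVar) (tshift t) = t.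
Proof. intros. unfold tshift. rewrite tsubst_comp. simpl. apply tsubst_id. Qed.

Lemma prv_sym : forall G s t, prv G (fAtom true s t) -> prv G (fAtom true t s).
Proof.
  intros. apply (prv_leib' G (fAtom true (tVar 0) (tshift s)) s t (fAtom true s s)); unfold inst; simpl;
  rewrite ?inst_tshift; auto using prv_refl.
Qed.

Lemma prv_trans : forall G s t u, prv G (fAtom true s t) -> prv G (fAtom true t u) ->
  prv G (fAtom true s u).
Proof.
  intros. apply (prv_leib' G (fAtom true (tshift s) (tVar 0)) t u (fAtom true s t)); unfold inst; simpl;
  rewrite ?inst_tshift; auto.
Qed.

Lemma prv_cong : forall G a b c, prv G (fAtom true a b) ->
  prv G (fAtom true (tsubst (scons a tVar) c) (tsubst (scons b tVar) c)).
Proof.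
  intros. apply (prv_leib' G (fAtom true (tshift (tsubst (scons a tVar) c)) c) a b
    (fAtom true (tsubst (scons a tVar) c) (tsubst (scons a tVar) c))); unfold inst; simpl;
  rewrite ?inst_tshift; auto using prv_refl.
Qed.

Lemma prv_succ : forall G a b, prv G (fAtom true a b) -> prv G (fAtom true (tSucc a) (tSucc b)).
Proof. intros. apply (prv_cong G a b (tSucc (tVar 0))); auto. Qed.

Lemma prv_plus : forall G a b c d, prv G (fAtom true a b) -> prv G (fAtom true c d) ->
  prv G (fAtom true (tPlus a c) (tPlus b d)).
Proof.
  intros. eapply prv_trans.
  - pose proof (prv_cong G a b (tPlus (tVar 0) (tshift c)) H). simpl in H1.
    rewrite !inst_tshift in H1. exact H1.
  - pose proof (prv_cong G c d (tPlus (tshift b) (tVar 0)) H0). simpl in H1.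
    rewrite !inst_tshift in H1. exact H1.
Qed.

Lemma prv_mult : forall G a b c d, prv G (fAtom true a b) -> prv G (fAtom true c d) ->
  prv G (fAtom true (tMult a c) (tMult b d)).
Proof.
  intros. eapply prv_trans.
  - pose proof (prv_cong G a b (tMult (tVar 0) (tshift c)) H). simpl in H1.
    rewrite !inst_tshift in H1. exact H1.
  - pose proof (prv_cong G c d (tMult (tshift b) (tVar 0)) H0). simpl in H1.
    rewrite !inst_tshift in H1. exact H1.
Qed.

Lemma prv_post0 : forall G C, PostRule [] C -> prv G C.
Proof. intros. eexists. eapply ty_post with (us := []); eauto. Qed.

Lemma prv_num_plus : forall G x y, prv G (fAtom true (tPlus (num x) (num y)) (num (x + y))).
Proof.
  intros G x y. induction y.
  - rewrite Nat.add_0_r. apply prv_post0. apply post_plus0.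
  - rewrite Nat.add_succ_r. simpl. eapply prv_trans.
    + apply prv_post0. apply post_plusS.
    + apply prv_succ. auto.
Qed.

Lemma prv_num_mult : forall G x y, prv G (fAtom true (tMult (num x) (num y)) (num (x * y))).
Proof.
  intros G x y. induction y.
  - rewrite Nat.mul_0_r. apply prv_post0. apply post_mult0.
  - rewrite Nat.mul_succ_r. simpl. eapply prv_trans.
    + apply prv_post0. apply post_multS.
    + eapply prv_trans; [|apply prv_num_plus]. apply prv_plus; auto using prv_refl.
Qed.

Definition e0 : nat -> nat := fun _ => 0.

Lemma teval_closed : forall t e e', tm_wf 0 t -> teval e t = teval e' t.
Proof. induction t; simpl; intros; try lia; intuition. Qed.

Lemma prv_eval : forall G t, tm_wf 0 t -> prv G (fAtom true t (num (teval e0 t))).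
Proof.
  induction t; simpl; intros.
  - lia.
  - apply prv_refl.
  - apply prv_succ; auto.
  - eapply prv_trans; [|apply prv_num_plus]. apply prv_plus; intuition.
  - eapply prv_trans; [|apply prv_num_mult]. apply prv_mult; intuition.
Qed.

Lemma prv_closed_eq : forall G s t, tm_wf 0 s -> tm_wf 0 t -> teval e0 s = teval e0 t ->
  prv G (fAtom true s t).
Proof.
  intros. eapply prv_trans; [apply prv_eval; auto|]. rewrite H1. apply prv_sym, prv_eval; auto.
Qed.

Lemma num_closed : forall n, tm_wf 0 (num n).
Proof. induction n; simpl; auto. Qed.

Lemma teval_num : forall n e, teval e (num n) = n.
Proof. induction n; simpl; auto. Qed.

Lemma prv_explode : forall G a b Q, is_atomic Q -> a <> b ->
  prv G (fAtom true (num a) (num b)) -> prv G Q.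
Proof.
  induction a; intros b Q HQ Hab H; destruct b.
  - lia.
  - apply prv_sym in H. destruct H as [u Hu]. eexists.
    eapply ty_post with (us := [u]); [apply post_succ_zero; auto|]. repeat constructor; simpl in Hu; exact Hu.
  - destruct H as [u Hu]. eexists.
    eapply ty_post with (us := [u]); [apply post_succ_zero; auto|]. repeat constructor; simpl in Hu; exact Hu.
  - apply (IHa b); auto. destruct H as [u Hu]. eexists.
    eapply ty_post with (us := [u]); [apply post_succ_inj; auto|]. repeat constructor; simpl in Hu; exact Hu.
Qed.

Lemma prv_neq : forall s t, tm_wf 0 s -> tm_wf 0 t -> teval e0 s <> teval e0 t ->
  prv [] (fAtom false s t).
Proof.
  intros s t Hs Ht Hne.
  set (P := fAtom true s t). set (C := fAtom false s t).
  assert (HinstP : inst P tZero = P).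
  { unfold P, inst; simpl. rewrite !tsubst_closed0; auto. }
  assert (HinstC : inst C tZero = C).
  { unfold C, inst; simpl. rewrite !tsubst_closed0; auto. }
  assert (HshC : fshift C = C).
  { unfold C, fshift; simpl. rewrite !tsubst_closed0; auto. }
  assert (H1 : prv [(0, fAll P)] (fEx C)).
  { assert (prv [(0, fAll P)] C) as [w Hw].
    { apply (prv_explode _ (teval e0 s) (teval e0 t)); simpl; auto.
      eapply prv_trans; [apply prv_sym, prv_eval; auto|].
      eapply prv_trans; [|apply prv_eval; auto].
      pose proof (ty_appI [(0, fAll P)] (pHyp 0) tZero P ltac:(apply ty_hyp; reflexivity)) as Hx.
      rewrite HinstP in Hx. eexists; exact Hx. }
    eexists. apply ty_exI with (m := tZero). rewrite HinstC. exact Hw. }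
  assert (H2 : prv [(0, fEx (perp P))] (fEx C)).
  { eexists. apply (ty_hyp _ 0). reflexivity. }
  destruct H1 as [u Hu], H2 as [v Hv].
  assert (H3 : typed [] (pEM 0 u v) (fEx C)) by (apply (ty_EM [] 0 u v P C); simpl; auto).
  eexists. eapply ty_exE with (x := 1); eauto. rewrite HshC. apply (ty_hyp _ 1). reflexivity.
Qed.

Lemma prv_atom_true : forall b s t, tm_wf 0 s -> tm_wf 0 t -> feval e0 (fAtom b s t) ->
  prv [] (fAtom b s t).
Proof.
  intros [] s t Hs Ht H; simpl in H.
  - apply prv_closed_eq; auto.
  - apply prv_neq; auto.
Qed.
Definition eqsub (s1 s2 : nat -> tm) := forall i, s1 i = s2 i \/
  (tm_wf 0 (s1 i) /\ tm_wf 0 (s2 i) /\ teval e0 (s1 i) = teval e0 (s2 i)).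

Lemma eqsub_sym : forall s1 s2, eqsub s1 s2 -> eqsub s2 s1.
Proof. unfold eqsub; intros. destruct (H i) as [H1|(?&?&?)]; auto. Qed.

Lemma eqsub_up : forall s1 s2, eqsub s1 s2 -> eqsub (up s1) (up s2).
Proof.
  unfold eqsub; intros s1 s2 H [|i]; simpl; auto.
  destruct (H i) as [H1|(?&?&?)]; [left; rewrite H1; auto|right].
  unfold tshift. rewrite !tsubst_closed0; auto.
Qed.

Lemma prv_term_eq : forall G s1 s2 a, eqsub s1 s2 ->
  prv G (fAtom true (tsubst s1 a) (tsubst s2 a)).
Proof.
  induction a; simpl; intros.
  - destruct (H n) as [H1|(?&?&?)]; [rewrite H1; apply prv_refl|apply prv_closed_eq; auto].
  - apply prv_refl.
  - apply prv_succ; auto.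
  - apply prv_plus; auto.
  - apply prv_mult; auto.
Qed.

Lemma prv_atom_transport : forall G b x y x' y', prv G (fAtom b x y) ->
  prv G (fAtom true x x') -> prv G (fAtom true y y') -> prv G (fAtom b x' y').
Proof.
  intros.
  assert (prv G (fAtom b x' y)).
  { apply (prv_leib' G (fAtom b (tVar 0) (tshift y)) x x' (fAtom b x y)); unfold inst; simpl;
    rewrite ?inst_tshift; auto. }
  apply (prv_leib' G (fAtom b (tshift x') (tVar 0)) y y' (fAtom b x' y)); unfold inst; simpl;
    rewrite ?inst_tshift; auto.
Qed.

Definition fresh (G : ctx) : nat := S (fold_right max 0 (map fst G)).

Lemma fresh_lookup_aux : forall G x, fold_right max 0 (map fst G) < x -> lookup x G = None.
Proof.
  induction G as [|[b B] G IH]; simpl; intros; auto.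
  destruct (Nat.eqb x b) eqn:E.
  - apply Nat.eqb_eq in E. lia.
  - apply IH. lia.
Qed.

Lemma fresh_lookup : forall G, lookup (fresh G) G = None.
Proof. intros. apply fresh_lookup_aux. unfold fresh. lia. Qed.


Lemma fsubst_id_gen : forall A s, (forall i, s i = tVar i) -> fsubst s A = A.
Proof.
  induction A; simpl; intros; f_equal; auto.
  - rewrite tsubst_ext with (s2 := tVar); auto using tsubst_id.
  - rewrite tsubst_ext with (s2 := tVar); auto using tsubst_id.
  - apply IHA. intros [|i]; simpl; auto. rewrite H. reflexivity.
  - apply IHA. intros [|i]; simpl; auto. rewrite H. reflexivity.
Qed.

Lemma inst_up_shift : forall B, inst (fsubst (up (fun n => tVar (S n))) B) (tVar 0) = B.
Proof.
  intros. unfold inst. rewrite fsubst_comp. apply fsubst_id_gen. intros [|i]; reflexivity.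
Qed.

Lemma transport : forall A G s1 s2, eqsub s1 s2 -> prv G (fsubst s1 A) -> prv G (fsubst s2 A).
Proof.
  induction A; simpl; intros G s1 s2 Hs HA.
  - eapply prv_atom_transport; eauto using prv_term_eq.
  - destruct HA as [u Hu].
    destruct (IHA1 G s1 s2 Hs (ex_intro _ _ (ty_fst _ _ _ _ Hu))) as [u1 Hu1].
    destruct (IHA2 G s1 s2 Hs (ex_intro _ _ (ty_snd _ _ _ _ Hu))) as [u2 Hu2].
    eexists; apply ty_pair; eauto.
  - destruct HA as [u Hu]. set (x := fresh G).
    assert (Hw : ctx_incl G ((x, fsubst s2 A1) :: G)).
    { unfold ctx_incl; simpl; intros. destruct (Nat.eqb x0 x) eqn:E; auto.
      apply Nat.eqb_eq in E. subst. unfold x in H. rewrite fresh_lookup in H. discriminate. }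
    destruct (IHA1 ((x, fsubst s2 A1) :: G) s2 s1 (eqsub_sym _ _ Hs)) as [v Hv].
    { eexists. apply ty_hyp. simpl. rewrite Nat.eqb_refl. reflexivity. }
    destruct (IHA2 ((x, fsubst s2 A1) :: G) s1 s2 Hs) as [w Hw'].
    { eexists. eapply ty_app; [eapply weaken; eauto| exact Hv]. }
    eexists. apply ty_lam. exact Hw'.
  - destruct HA as [u Hu].
    destruct (IHA1 ((0, fsubst s1 A1) :: G) s1 s2 Hs) as [v Hv].
    { eexists. apply (ty_hyp _ 0). reflexivity. }
    destruct (IHA2 ((0, fsubst s1 A2) :: G) s1 s2 Hs) as [w Hw].
    { eexists. apply (ty_hyp _ 0). reflexivity. }
    eexists. eapply ty_case; [exact Hu| apply ty_inl; exact Hv | apply ty_inr; exact Hw].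
  - destruct HA as [u Hu].
    destruct (typed_subst _ _ _ Hu (fun n => tVar (S n))) as [u' Hu'].
    change (map_ctx (fun n => tVar (S n)) G) with (ctx_shift G) in Hu'. simpl in Hu'.
    destruct (IHA (ctx_shift G) (up s1) (up s2) (eqsub_up _ _ Hs)) as [v Hv].
    { eexists. pose proof (ty_appI _ _ (tVar 0) _ Hu') as Hx.
      rewrite inst_up_shift in Hx. exact Hx. }
    eexists. apply ty_lamI. exact Hv.
  - destruct HA as [u Hu].
    destruct (IHA ((0, fsubst (up s1) A) :: ctx_shift G) (up s1) (up s2) (eqsub_up _ _ Hs))
      as [v Hv].
    { eexists. apply (ty_hyp _ 0). reflexivity. }
    eexists. eapply ty_exE with (x := 0); [exact Hu|].
    unfold fshift. simpl. apply ty_exI with (m := tVar 0). rewrite inst_up_shift. exact Hv.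
Qed.
Definition nums (e : nat -> nat) : nat -> tm := fun k => num (e k).

Fixpoint slash (e : nat -> nat) (A : form) : Prop :=
  match A with
  | fAtom b s t => feval e (fAtom b s t)
  | fAnd A B => slash e A /\ slash e B
  | fOr A B => (prv [] (fsubst (nums e) A) /\ slash e A) \/
               (prv [] (fsubst (nums e) B) /\ slash e B)
  | fImp A B => slash e A -> prv [] (fsubst (nums e) A) -> slash e B
  | fAll A => forall n, slash (ncons n e) A
  | fEx A => exists n, prv [] (fsubst (nums (ncons n e)) A) /\ slash (ncons n e) A
  end.

Lemma nums_ext : forall A e e', (forall i, e i = e' i) -> fsubst (nums e) A = fsubst (nums e') A.
Proof. intros. apply fsubst_ext. intros; unfold nums; rewrite H; auto. Qed.

Lemma slash_ext : forall A e e', (forall i, e i = e' i) -> (slash e A <-> slash e' A).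
Proof.
  induction A; simpl; intros.
  - apply (feval_ext (fAtom b t t0)); auto.
  - rewrite (IHA1 e e'), (IHA2 e e') by auto; tauto.
  - rewrite (IHA1 e e'), (IHA2 e e'), (nums_ext A1 e e') by auto; tauto.
  - rewrite (IHA1 e e'), (IHA2 e e'), (nums_ext A1 e e'), (nums_ext A2 e e') by auto; tauto.
  - split; intros H1 n; specialize (H1 n);
      [rewrite <- (IHA (ncons n e) (ncons n e'))|rewrite (IHA (ncons n e) (ncons n e'))];
      auto using ncons_ext.
  - split; intros [n H1]; exists n;
      [rewrite <- (IHA (ncons n e) (ncons n e')), <- (nums_ext A (ncons n e) (ncons n e'))
      |rewrite (IHA (ncons n e) (ncons n e')), (nums_ext A (ncons n e) (ncons n e'))];
      auto using ncons_ext.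
Qed.

Lemma eqsub_nums : forall s e,
  eqsub (fun i => tsubst (nums e) (s i)) (nums (fun i => teval e (s i))).
Proof.
  intros s e i. right. unfold nums. split; [|split].
  - apply tm_wf_subst. intros; apply num_closed.
  - apply num_closed.
  - rewrite teval_num, teval_subst. apply teval_ext. intros; apply teval_num.
Qed.

Lemma prv_subst_iff : forall A s e,
  prv [] (fsubst (nums e) (fsubst s A)) <-> prv [] (fsubst (nums (fun i => teval e (s i))) A).
Proof.
  intros. rewrite fsubst_comp. split; intros; eapply transport; eauto using eqsub_nums, eqsub_sym.
Qed.

Lemma slash_subst : forall A s e, slash e (fsubst s A) <-> slash (fun i => teval e (s i)) A.
Proof.
  induction A; simpl; intros.
  - apply (feval_subst (fAtom b t t0)).
  - rewrite IHA1, IHA2; tauto.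
  - rewrite IHA1, IHA2, !prv_subst_iff; tauto.
  - rewrite IHA1, IHA2, !prv_subst_iff; tauto.
  - split; intros H1 n; specialize (H1 n); rewrite IHA in *;
      [rewrite <- (slash_ext A _ _ (up_eval s e n))|rewrite (slash_ext A _ _ (up_eval s e n))]; auto.
  - split; intros [n [H1 H2]]; exists n; rewrite IHA, prv_subst_iff in *.
    + rewrite <- (slash_ext A _ _ (up_eval s e n)), <- (nums_ext A _ _ (up_eval s e n)); auto.
    + rewrite (slash_ext A _ _ (up_eval s e n)), (nums_ext A _ _ (up_eval s e n)); auto.
Qed.

Lemma slash_atomic : forall C e, is_atomic C -> (slash e C <-> feval e C).
Proof. destruct C; simpl; tauto. Qed.

Lemma post_atomic : forall Ps C, PostRule Ps C -> is_atomic C.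
Proof.
  intros Ps C H; destruct H; simpl; auto. destruct P; simpl in *; auto.
Qed.

Definition hypok (G : ctx) (e : nat -> nat) := forall x B, lookup x G = Some B ->
  prv [] (fsubst (nums e) B) /\ slash e B.

Lemma hypok_prv : forall G e x B, hypok G e -> lookup x G = Some B -> prv [] (fsubst (nums e) B).
Proof. intros. apply (H x B H0). Qed.

Lemma hypok_true : forall G e x B, hypok G e -> lookup x G = Some B -> feval e B.
Proof.
  intros. destruct (H x B H0) as [[u Hu] _].
  pose proof (sound _ _ _ Hu e0 ltac:(simpl; discriminate)) as Hs.
  rewrite feval_subst in Hs. eapply feval_ext; [|exact Hs]. intros; unfold nums; rewrite teval_num; auto.
Qed.

Lemma hypok_cons : forall G e x A, hypok G e -> prv [] (fsubst (nums e) A) -> slash e A ->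
  hypok ((x, A) :: G) e.
Proof.
  unfold hypok; simpl; intros. destruct (Nat.eqb x0 x); eauto. injection H2; intros; subst; auto.
Qed.

Lemma shift_nums : forall B n e, fsubst (nums (ncons n e)) (fshift B) = fsubst (nums e) B.
Proof. intros. unfold fshift. rewrite fsubst_comp. apply fsubst_ext. intros; reflexivity. Qed.

Lemma slash_shift : forall B n e, slash (ncons n e) (fshift B) <-> slash e B.
Proof. intros. unfold fshift. rewrite slash_subst. apply slash_ext. intros; reflexivity. Qed.

Lemma hypok_shift : forall G e n, hypok G e -> hypok (ctx_shift G) (ncons n e).
Proof.
  unfold hypok; intros. rewrite lookup_shift in H0.
  destruct (lookup x G) eqn:E; simpl in H0; try discriminate. injection H0; intros; subst.
  rewrite shift_nums, slash_shift. eauto.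
Qed.

Lemma slash_inst : forall A m e, slash e (inst A m) <-> slash (ncons (teval e m) e) A.
Proof. intros. unfold inst. rewrite slash_subst. apply slash_ext. intros [|i]; reflexivity. Qed.

Lemma inst_up : forall B s m, inst (fsubst (up s) B) m = fsubst (fun i => match i with 0 => m | S j => s j end) B.
Proof.
  intros. unfold inst. rewrite fsubst_comp. apply fsubst_ext. intros [|i]; simpl; auto.
  apply inst_tshift.
Qed.

Lemma slash_sound : forall G t A, typed G t A -> forall e, hypok G e -> slash e A.
Proof.
  apply (typed_ind2 (fun G t A => forall e, hypok G e -> slash e A)); intros; simpl.
  - apply (H0 x A H).
  - split; auto.
  - apply (H0 e H1).
  - apply (H0 e H1).
  - intros HA PA. apply H0. apply hypok_cons; auto.
  - apply (H0 e H3); [apply H2; auto|]. eapply prv_subst_nil; eauto. intros; eapply hypok_prv; eauto.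
  - left. split; auto. eapply prv_subst_nil; eauto. intros; eapply hypok_prv; eauto.
  - right. split; auto. eapply prv_subst_nil; eauto. intros; eapply hypok_prv; eauto.
  - destruct (H0 e H5) as [[P1 S1]|[P1 S1]].
    + apply H2. apply hypok_cons; auto.
    + apply H4. apply hypok_cons; auto.
  - intros n. apply H0. apply hypok_shift; auto.
  - apply slash_inst. apply (H0 e H1).
  - exists (teval e m). split.
    + assert (prv [] (fsubst (nums e) (inst A m))).
      { eapply prv_subst_nil; eauto. intros; eapply hypok_prv; eauto. }
      unfold inst in H2. rewrite prv_subst_iff in H2.
      rewrite <- (nums_ext A (fun i => teval e (scons m tVar i))); auto. intros [|i]; reflexivity.
    + apply slash_inst. auto.
  - destruct (H0 e H3) as [n [P1 S1]].
    apply (slash_shift C n e). apply H2. apply hypok_cons; auto. apply hypok_shift; auto.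
  - apply slash_inst.
    assert (Hu : prv [] (fsubst (nums e) (inst A tZero))).
    { eapply prv_subst_nil; eauto. intros; eapply hypok_prv; eauto. }
    assert (Hv : prv [] (fsubst (nums e) (fAll (fImp A (inst_succ A))))).
    { eapply prv_subst_nil; eauto. intros; eapply hypok_prv; eauto. }
    specialize (H0 e H3). specialize (H2 e H3). simpl in H2.
    assert (forall k, prv [] (fsubst (nums (ncons k e)) A) /\ slash (ncons k e) A).
    { induction k.
      - split.
        + unfold inst in Hu. rewrite fsubst_comp in Hu.
          erewrite fsubst_ext; [exact Hu|]. intros [|i]; reflexivity.
        + apply slash_inst in H0. exact H0.
      - destruct IHk as [Pk Sk]. split.
        + destruct Hv as [v' Hv']. simpl in Hv'.
          pose proof (ty_appI _ _ (num k) _ Hv') as Hx.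
          change (fImp (fsubst (up (nums e)) A) (fsubst (up (nums e)) (inst_succ A))) with (fsubst (up (nums e)) (fImp A (inst_succ A))) in Hx.
          rewrite inst_up in Hx. simpl in Hx.
          destruct Pk as [w Hw].
          assert (Hy : typed [] (pApp (pAppI v' (num k)) w)
             (fsubst (fun i => match i with 0 => num k | S j => nums e j end) (inst_succ A))).
          { eapply ty_app; [exact Hx|]. erewrite fsubst_ext; [exact Hw|].
            intros [|i]; reflexivity. }
          eexists. unfold inst_succ in Hy. rewrite fsubst_comp in Hy.
          erewrite fsubst_ext; [exact Hy|]. intros [|i]; reflexivity.
        + specialize (H2 k Sk Pk). unfold inst_succ in H2. rewrite slash_subst in H2.
          eapply slash_ext; [|exact H2]. intros [|i]; reflexivity. }
    apply H4.
  - apply slash_atomic; [eapply post_atomic; eauto|].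
    eapply sound; [eapply ty_post; eauto|]. intros; eapply hypok_true; eauto.
  - apply (H1 a (fAll P0) H0).
  - apply (H1 a (fEx (perp P0)) H0).
  - assert (Ht : typed G (pEM a u v) (fEx C)) by (apply (ty_EM G a u v P0 C); auto).
    destruct (sound _ _ _ Ht e ltac:(intros; eapply hypok_true; eauto)) as [n Hn].
    exists n. split.
    + destruct C; try contradiction. simpl.
      apply prv_atom_true; try (apply tm_wf_subst; intros; apply num_closed).
      pose proof (feval_subst (fAtom b t t0) (nums (ncons n e)) e0) as Hf.
      apply Hf. eapply feval_ext; [|exact Hn]. intros; unfold nums; rewrite teval_num; auto.
    + apply slash_atomic; auto.
Qed.

Theorem mainTheorem4 (t : pt) (A B : form) :
  pt_closed t -> form_closed (fOr A B) -> typed nil t (fOr A B) ->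
  (exists u : pt, typed nil u A) \/ (exists v : pt, typed nil v B).
Proof.
  intros _ [HA HB] Ht.
  pose proof (slash_sound _ _ _ Ht e0 ltac:(unfold hypok; simpl; discriminate)) as Hs.
  simpl in Hs.
  rewrite (fsubst_closed A 0) in Hs by (auto; intros; lia).
  rewrite (fsubst_closed B 0) in Hs by (auto; intros; lia).
  destruct Hs as [[H1 _]|[H1 _]]; [left|right]; exact H1.
Qed.
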